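(* Let $n\ge2$, let $\lambda_1\ge\dots\ge\lambda_n$ be real, and let $\mu_1\ge\dots\ge\mu_{n-1}$ be the critical points (with multiplicity) of $q(x)=\prod_{j=1}^n(x-\lambda_j)$. Then for every $r$ with $1\le r\le n-1$, $$(n-1)\sum_{j=1}^r\lambda_{j+1}+r\lambda_1\le n\sum_{j=1}^r\mu_j\le(n-1)\sum_{j=1}^r\lambda_j+r\lambda_{r+1}.$$ *)

(* Defs.v *)
From mathcomp Require Import all_boot all_order all_algebra.
From mathcomp Require Import reals.
Set Implicit Arguments. Unset Strict Implicit. Unset Printing Implicit Defensive.

(* Main.v *)
Require Import Defs.
From mathcomp Require Import all_boot all_order all_algebra.
From mathcomp Require Import reals.
From mathcomp Require Import ring lra.
Import Order.TTheory GRing.Theory Num.Theory.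
Local Open Scope ring_scope.
Set Implicit Arguments. Unset Strict Implicit. Unset Printing Implicit Defensive.

Lemma mono_le (R : realFieldType) (N : nat) (x : nat -> R) a b :
  (forall k, (k.+1 < N)%N -> x k.+1 <= x k) -> (a <= b)%N -> (b < N)%N -> x b <= x a.
Proof.
move=> hx; elim: b => [|b IH]; first by rewrite leqn0 => /eqP ->.
rewrite leq_eqVlt => /orP[/eqP -> //| ha] hb.
apply: le_trans (hx _ hb) _; apply: IH => //; exact: ltnW.
Qed.

Lemma lp_bound (R : realFieldType) (N p : nat) (x c : nat -> R) (th : R) :
  (p < N)%N -> (forall k, (k.+1 < N)%N -> x k.+1 <= x k) ->
  (forall k, (k < N)%N -> 0 <= c k <= th) ->
  \sum_(k < N) c k * x k <= th * \sum_(k < p) x k + (\sum_(k < N) c k - p%:R * th) * x p.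
Proof.
move=> hp hx hc.
have E1 : th * \sum_(k < p) x k = \sum_(k < N) (if (k < p)%N then th * x k else 0).
  rewrite (big_ord_widen _ _ (ltnW hp)) mulr_sumr big_mkcond /=.
  by apply: eq_bigr => k _; case: ifP.
have E2 : p%:R * th * x p = \sum_(k < N) (if (k < p)%N then th * x p else 0).
  rewrite -big_mkcond /= -(big_ord_widen _ (fun _ => th * x p) (ltnW hp)) /=.
  by rewrite sumr_const card_ord mulr_natl mulrnAl.
rewrite -subr_ge0 mulrBl E1 mulr_suml E2.
have -> : \sum_(k < N) (if (k < p)%N then th * x k else 0) +
  (\sum_(i < N) c i * x p - \sum_(k < N) (if (k < p)%N then th * x p else 0)) -
  \sum_(k < N) c k * x k =
  \sum_(k < N) (if (k < p)%N then (th - c k) * (x k - x p) else c k * (x p - x k)).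
  rewrite -sumrB -big_split -sumrB /=; apply: eq_bigr => k _; case: ifP => _; ring.
apply: sumr_ge0 => k _; have /andP[c0 c1] := hc k (ltn_ord k).
case: ifP => hk.
  apply: mulr_ge0; first by rewrite subr_ge0.
  rewrite subr_ge0; apply: (mono_le hx) => //; exact: ltnW.
apply: mulr_ge0 => //; rewrite subr_ge0; apply: (mono_le hx) => //.
by rewrite leqNgt hk.
Qed.
Lemma parseval (R : fieldType) (n : nat) (v : nat -> nat -> R) (d : nat -> R) :
  (forall i, (i < n)%N -> d i = \sum_(k < n) v i k ^+ 2) ->
  (forall i, (i < n)%N -> d i != 0) ->
  (forall i i', (i < n)%N -> (i' < n)%N -> i != i' -> \sum_(k < n) v i k * v i' k = 0) ->
  forall k l, (k < n)%N -> (l < n)%N ->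
    \sum_(i < n) v i k * v i l / d i = (k == l)%:R.
Proof.
move=> hd hd0 ho k l hk hl.
pose A := \matrix_(i < n, k < n) v i k.
pose B := \matrix_(k < n, i < n) (v i k / d i).
have hAB : A *m B = 1%:M.
  apply/matrixP => i i'; rewrite !mxE.
  under eq_bigr do rewrite !mxE.
  have [<-|ne] := eqVneq i i'.
    rewrite (eq_bigr (fun j : 'I_n => v i j ^+ 2 / d i)); last by move=> j _; rewrite mulrA expr2.
    by rewrite -mulr_suml -hd // mulfV //; exact: hd0.
  rewrite (eq_bigr (fun j : 'I_n => v i j * v i' j / d i')); last by move=> j _; rewrite mulrA.
  rewrite -mulr_suml ho ?mul0r //.
have := mulmx1C hAB => /matrixP /(_ (Ordinal hk) (Ordinal hl)).
rewrite !mxE /=.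
under eq_bigr do rewrite !mxE /=.
move=> h; rewrite -[RHS]h; apply: eq_bigr => i _; by rewrite mulrAC.
Qed.

Lemma sum_delta (R : nzRingType) (N : nat) (k : 'I_N) :
  \sum_(l < N) ((k : nat) == l)%:R = 1 :> R.
Proof.
rewrite (bigD1 k) //= eqxx big1 ?addr0 // => l hl.
by rewrite eq_sym (inj_eq val_inj) (negbTE hl).
Qed.

Lemma cs_ineq (R : realFieldType) (N : nat) (f : nat -> R) :
  (0 < N)%N -> (\sum_(k < N) f k) ^+ 2 <= N%:R * \sum_(k < N) f k ^+ 2.
Proof.
move=> N0; set S := \sum_(k < N) f k; set Q := \sum_(k < N) f k ^+ 2.
have H : 0 <= \sum_(k < N) (N%:R * f k - S) ^+ 2 by apply: sumr_ge0 => *; exact: sqr_ge0.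
have E : \sum_(k < N) (N%:R * f k - S) ^+ 2 = N%:R * (N%:R * Q - S ^+ 2).
  rewrite (eq_bigr (fun k : 'I_N => N%:R ^+ 2 * f k ^+ 2 - (2%:R * N%:R * S) * f k + S ^+ 2)); last by move=> k _; ring.
  rewrite big_split sumrB /= -!mulr_sumr sumr_const card_ord -/S -/Q mulr_natl.
  ring.
rewrite E in H; rewrite -subr_ge0.
by rewrite pmulr_rge0 in H; rewrite ?ltr0n.
Qed.

Lemma spec_part (R : realFieldType) (m : nat) (L M : nat -> R) (y : nat -> nat -> R) (be : nat -> R) :
  (0 < m)%N ->
  (forall k, (k.+1 < m.+1)%N -> L k.+1 <= L k) ->
  (forall i, (i.+1 < m)%N -> M i.+1 <= M i) ->
  (forall i, (i < m)%N -> \sum_(k < m.+1) y i k = 0) ->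
  (forall i k, (i < m)%N -> (k < m.+1)%N -> L k * y i k = M i * y i k + be i) ->
  (forall i, (i < m)%N -> 0 < \sum_(k < m.+1) y i k ^+ 2) ->
  (forall i i', (i < m)%N -> (i' < m)%N -> i != i' -> \sum_(k < m.+1) y i k * y i' k = 0) ->
  forall r, (1 <= r)%N -> (r <= m)%N ->
  m%:R * (\sum_(1 <= j < r.+1) L j) + r%:R * L 0%N <= m.+1%:R * (\sum_(i < r) M i)
  /\ m.+1%:R * (\sum_(i < r) M i) <= m%:R * (\sum_(i < r) L i) + r%:R * L r.
Proof.
move=> m0 hL hM hs he hn ho r r1 rm.
pose n := m.+1.
pose d i := \sum_(k < n) y i k ^+ 2.
have dpos : forall i, (i < m)%N -> 0 < d i by [].
have n0 : (n%:R : R) != 0 by rewrite pnatr_eq0.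
have hP : forall k l, (k < n)%N -> (l < n)%N ->
    \sum_(i < m) y i k * y i l / d i = (k == l)%:R - n%:R^-1.
  move=> k l hk hl.
  pose v i k := if (i < m)%N then y i k else 1.
  pose dv i := \sum_(k < n) v i k ^+ 2.
  have dvm : dv m = n%:R.
    rewrite /dv /v ltnn (eq_bigr (fun _ => 1)); last by move=> *; rewrite expr1n.
    by rewrite sumr_const card_ord.
  have dvi : forall i, (i < m)%N -> dv i = d i.
    by move=> i hi; rewrite /dv /v hi.
  have := @parseval R n v dv (fun _ _ => erefl) _ _ k l hk hl.
  rewrite big_ord_recr /= dvm /v ltnn !mul1r => <-.
  - rewrite addrK; apply: eq_bigr => i _; by rewrite (ltn_ord i) dvi.
  - move=> i hi; have [him|] := ltnP i m; first by rewrite dvi // gt_eqF // hn.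
    move=> hmi; have -> : i = m by apply/eqP; rewrite eqn_leq hmi -ltnS hi.
    by rewrite dvm.
  - move=> i i' hi hi' ne; rewrite /v.
    case: (ltnP i m) => him; case: (ltnP i' m) => him'.
    + exact: ho.
    + by under eq_bigr do rewrite mulr1; exact: hs.
    + by under eq_bigr do rewrite mul1r; exact: hs.
    + exfalso; move: ne; have -> : i = m by apply/eqP; rewrite eqn_leq him -ltnS hi.
      have -> : i' = m by apply/eqP; rewrite eqn_leq him' -ltnS hi'.
      by rewrite eqxx.
have d0 : forall i, (i < m)%N -> d i != 0 by move=> i hi; rewrite gt_eqF // dpos.
have hR : forall i, (i < m)%N -> M i * d i = \sum_(k < n) L k * y i k ^+ 2.
  move=> i hi; rewrite (eq_bigr (fun k : 'I_n => M i * y i k ^+ 2 + be i * y i k)); last first.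
    by move=> k _; rewrite expr2 mulrA he //; ring.
  by rewrite big_split /= -!mulr_sumr hs // mulr0 addr0.
have rn : (r < n)%N by rewrite ltnS.
pose c k := \sum_(i < r) y i k ^+ 2 / d i.
have hU : \sum_(i < r) M i = \sum_(k < n) c k * L k.
  rewrite /c; under [RHS]eq_bigr do rewrite mulr_suml.
  rewrite exchange_big /=; apply: eq_bigr => i _.
  have hi : (i < m)%N by apply: leq_trans (ltn_ord i) rm.
  rewrite -[M i](mulfK (d0 _ hi)) hR // mulr_suml; apply: eq_bigr => k _; ring.
have c0 : forall k, 0 <= c k.
  move=> k; apply: sumr_ge0 => i _; apply: divr_ge0; first exact: sqr_ge0.
  apply: sumr_ge0 => *; exact: sqr_ge0.
have c1 : forall k, (k < n)%N -> c k <= 1 - n%:R^-1.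
  move=> k hk; have := hP k k hk hk; rewrite eqxx => <-.
  rewrite /c (big_ord_widen m (fun i => y i k ^+ 2 / d i) rm) [X in _ <= X]big_mkcond /=.
  rewrite [X in X <= _]big_mkcond /=; apply: ler_sum => i _; rewrite -expr2.
  case: ifP => // _; apply: divr_ge0; first exact: sqr_ge0.
  apply: sumr_ge0 => *; exact: sqr_ge0.
have csum : \sum_(k < n) c k = r%:R.
  rewrite /c exchange_big /= (eq_bigr (fun _ => 1)); first by rewrite sumr_const card_ord.
  move=> i _; have hi : (i < m)%N by apply: leq_trans (ltn_ord i) rm.
  by rewrite -mulr_suml mulfV // d0.
have hup := lp_bound (N:=n) (p:=r) (x:=L) (c:=c) (th:= 1 - n%:R^-1) rn hL
   (fun k hk => introT andP (conj (c0 k) (c1 k hk))).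
rewrite csum -hU in hup.
split; last first.
  apply: le_trans (ler_wpM2l (ler0n _ _) hup) _.
  rewrite le_eqVlt; apply/orP; left; apply/eqP; rewrite /n -natr1 in n0 *; field.
  exact: n0.
pose Y i := \sum_(k < r.+1) y i k.
pose Q2 i := \sum_(k < r.+1) y i k ^+ 2.
pose a i := Q2 i / d i - (r.+1%:R)^-1 * (Y i ^+ 2 / d i).
have r1n : (r.+1 <= n)%N by [].
have hQ2 : forall w : nat -> R, \sum_(i < m) w i * (Q2 i / d i) =
    \sum_(k < r.+1) \sum_(i < m) w i * (y i k * y i k / d i).
  move=> w; rewrite exchange_big /=; apply: eq_bigr => i _.
  by rewrite /Q2 mulr_suml mulr_sumr; apply: eq_bigr => k _; rewrite expr2.
have hY2 : forall w : nat -> R, \sum_(i < m) w i * (Y i ^+ 2 / d i) =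
    \sum_(k < r.+1) \sum_(l < r.+1) \sum_(i < m) w i * (y i k * y i l / d i).
  move=> w.
  have -> : \sum_(i < m) w i * (Y i ^+ 2 / d i) =
      \sum_(i < m) \sum_(k < r.+1) \sum_(l < r.+1) w i * (y i k * y i l / d i).
    apply: eq_bigr => i _.
    rewrite /Y expr2 mulr_suml mulr_suml mulr_sumr; apply: eq_bigr => k _.
    rewrite mulr_sumr mulr_suml mulr_sumr; apply: eq_bigr => l _; ring.
  rewrite exchange_big /=; apply: eq_bigr => k _.
  by rewrite exchange_big.
have hPr : forall k l : 'I_r.+1, \sum_(i < m) y i k * y i l / d i = (k == l :> nat)%:R - n%:R^-1.
  by move=> k l; apply: hP; apply: leq_trans (ltn_ord _) r1n.
have hdl : forall k : 'I_r.+1, \sum_(l < r.+1) ((k == l :> nat)%:R - n%:R^-1 : R) = 1 - r.+1%:R / n%:R.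
  by move=> k; rewrite sumrB sum_delta sumr_const card_ord mulr_natl.
have rp0 : (r.+1%:R : R) != 0 by rewrite pnatr_eq0.
have asum : \sum_(i < m) a i = r%:R.
  have E1 := hQ2 (fun _ => 1); have E2 := hY2 (fun _ => 1).
  rewrite /a sumrB -mulr_sumr.
  have -> : \sum_(i < m) Q2 i / d i = \sum_(i < m) 1 * (Q2 i / d i).
    by apply: eq_bigr => *; rewrite mul1r.
  have -> : \sum_(i < m) Y i ^+ 2 / d i = \sum_(i < m) 1 * (Y i ^+ 2 / d i).
    by apply: eq_bigr => *; rewrite mul1r.
  rewrite E1 E2.
  have A1 : \sum_(k < r.+1) \sum_(i < m) 1 * (y i k * y i k / d i) = r.+1%:R * (1 - n%:R^-1).
    rewrite (eq_bigr (fun _ => 1 - n%:R^-1)); first by rewrite sumr_const card_ord mulr_natl.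
    by move=> k _; under eq_bigr do rewrite mul1r; rewrite hPr eqxx.
  have A2 : \sum_(k < r.+1) \sum_(l < r.+1) \sum_(i < m) 1 * (y i k * y i l / d i)
      = r.+1%:R * (1 - r.+1%:R / n%:R).
    rewrite (eq_bigr (fun _ => 1 - r.+1%:R / n%:R)). rewrite sumr_const card_ord. by rewrite [RHS]mulrC [RHS]mulr_natr.
    move=> k _; rewrite -(hdl k); apply: eq_bigr => l _.
    by under eq_bigr do rewrite mul1r; rewrite hPr.
  rewrite A1 A2.
  move: rp0 n0; rewrite /n -!natr1 => rp0 n0'; field.
  by rewrite n0' rp0.
pose g l := \sum_(i < m) be i * (y i l / d i).
have hMyy : forall k l : 'I_r.+1, \sum_(i < m) M i * (y i k * y i l / d i)
    = L k * ((k == l :> nat)%:R - n%:R^-1) - g l.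
  move=> k l; rewrite -(hPr k l) mulr_sumr -sumrB; apply: eq_bigr => i _.
  have hk : (k < n)%N by apply: leq_trans (ltn_ord _) r1n.
  have E : M i * y i k = L k * y i k - be i by rewrite he // addrK.
  transitivity ((M i * y i k) * (y i l / d i)); first ring.
  rewrite E; ring.
pose SL := \sum_(k < r.+1) L k.
pose G := \sum_(k < r.+1) g k.
have aMsum : \sum_(i < m) a i * M i = r%:R / r.+1%:R * SL.
  have E1 := hQ2 M; have E2 := hY2 M.
  have -> : \sum_(i < m) a i * M i =
     \sum_(i < m) M i * (Q2 i / d i) - r.+1%:R^-1 * \sum_(i < m) M i * (Y i ^+ 2 / d i).
    rewrite mulr_sumr -sumrB; apply: eq_bigr => i _; rewrite /a; ring.
  have B1 : \sum_(k < r.+1) \sum_(i < m) M i * (y i k * y i k / d i) = SL * (1 - n%:R^-1) - G.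
    rewrite /SL /G mulr_suml -sumrB; apply: eq_bigr => k _; by rewrite hMyy eqxx.
  have B2 : \sum_(k < r.+1) \sum_(l < r.+1) \sum_(i < m) M i * (y i k * y i l / d i)
      = SL * (1 - r.+1%:R / n%:R) - r.+1%:R * G.
    have -> : r.+1%:R * G = \sum_(k < r.+1) G by rewrite sumr_const card_ord mulr_natl.
    rewrite /SL mulr_suml -sumrB; apply: eq_bigr => k _.
    under eq_bigr do rewrite hMyy.
    by rewrite sumrB -mulr_sumr hdl.
  rewrite E1 E2 B1 B2; move: rp0 n0; rewrite /n -!natr1 => rp0 n0'; field.
  by rewrite n0' rp0.
have a01 : forall i, (i < m)%N -> 0 <= a i <= 1.
  move=> i hi; have dp := dpos i hi.
  have cs : Y i ^+ 2 <= r.+1%:R * Q2 i := cs_ineq (y i) (ltn0Sn r).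
  have hQd : Q2 i <= d i.
    rewrite /Q2 /d (big_ord_widen n (fun k => y i k ^+ 2) r1n) [X in _ <= X]big_mkcond /=.
    rewrite big_mkcond /=; apply: ler_sum => k _; case: ifP => // _; exact: sqr_ge0.
  have e1 : r.+1%:R^-1 * Y i ^+ 2 <= Q2 i by rewrite ler_pdivrMl ?ltr0n.
  have e2 : r.+1%:R^-1 * (Y i ^+ 2 / d i) <= Q2 i / d i.
    rewrite mulrA; apply: ler_wpM2r => //; rewrite invr_ge0; exact: ltW.
  have e3 : 0 <= r.+1%:R^-1 * (Y i ^+ 2 / d i).
    apply: mulr_ge0; first by rewrite invr_ge0.
    apply: divr_ge0; [exact: sqr_ge0| exact: ltW].
  have e4 : Q2 i / d i <= 1 by rewrite ler_pdivrMr // mul1r.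
  rewrite /a; apply/andP; split; first by rewrite subr_ge0.
  by apply: le_trans e4; rewrite gerBl.
have hlow : r%:R / r.+1%:R * SL <= \sum_(i < r) M i.
  rewrite -aMsum.
  have hr : (r.-1 < m)%N by apply: leq_trans rm; rewrite prednK.
  have := lp_bound (N:=m) (p:=r.-1) (x:=M) (c:=a) (th:=1) hr hM
    (fun k hk => a01 k hk).
  have e1 : (r%:R - r.-1%:R : R) = 1 by rewrite -{1}(prednK r1) -natr1 addrAC subrr add0r.
  have E0 : forall k, \sum_(i < k.+1) M i = \sum_(i < k) M i + M k.
    by move=> k; rewrite big_ord_recr.
  have E := E0 r.-1; rewrite prednK // in E.
  by rewrite asum mul1r mulr1 e1 mul1r E.
pose T := \sum_(1 <= j < r.+1) L j.
have hSL : SL = L 0%N + T.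
  by rewrite /SL /T big_ord_recl big_add1 /= big_mkord.
have hT : T <= r%:R * L 0%N.
  rewrite /T big_add1 /= big_mkord.
  apply: le_trans (_ : _ <= \sum_(i < r) L 0%N) _; last by rewrite sumr_const card_ord mulr_natl.
  apply: ler_sum => i _; apply: (mono_le hL) => //.
  by rewrite ltnS; apply: leq_trans (ltn_ord i) rm.
have hL0 : 0 <= (m%:R - r%:R : R) by rewrite subr_ge0 ler_nat.
apply: le_trans (ler_wpM2l (ler0n _ m.+1) hlow).
rewrite hSL -/T -subr_ge0.
have -> : m.+1%:R * (r%:R / r.+1%:R * (L 0%N + T)) - (m%:R * T + r%:R * L 0%N)
   = (m%:R - r%:R) * (r%:R * L 0%N - T) / r.+1%:R.
  by move: rp0; rewrite -!natr1 => rp0'; field.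
apply: divr_ge0; last exact: ler0n.
by apply: mulr_ge0 => //; rewrite subr_ge0.
Qed.
Lemma deriv_prod_ord (R : comNzRingType) (n : nat) (F : nat -> {poly R}) :
  (\prod_(k < n) F k)^`() =
  \sum_(k < n) (F k)^`() * \prod_(j < n | (j : nat) != k) F j.
Proof.
elim: n => [|n IH]; first by rewrite !big_ord0 derivC.
rewrite big_ord_recr /= derivM IH big_distrl /= big_ord_recr /=.
congr (_ + _).
  apply: eq_bigr => k _; rewrite -mulrA; congr (_ * _).
  rewrite [RHS]big_mkcond big_ord_recr /= ifT; last by rewrite eq_sym ltn_eqF.
  by rewrite -big_mkcond.
rewrite mulrC; congr (_ * _).
rewrite [RHS]big_mkcond big_ord_recr /= eqxx mulr1.
by apply: eq_bigr => k _; rewrite ltn_eqF.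
Qed.

Lemma prod_D1 (R : comNzRingType) (n k : nat) (F : nat -> R) : (k < n)%N ->
  \prod_(j < n) F j = F k * \prod_(j < n | (j : nat) != k) F j.
Proof. by move=> hk; rewrite (bigD1 (Ordinal hk)) //=. Qed.

Lemma split_prod (R : idomainType) (N : nat) (F : nat -> R) (a : R) :
  \prod_(i < N) ('X - (F i)%:P) =
  ('X - a%:P) ^+ #|[set i : 'I_N | F i == a]| * \prod_(i < N | F i != a) ('X - (F i)%:P).
Proof.
rewrite (bigID (fun i : 'I_N => F i == a)) /=; congr (_ * _).
rewrite (eq_bigr (fun _ => 'X - a%:P)); last by move=> i /eqP ->.
by rewrite -prodr_const; apply: eq_bigl => i; rewrite inE.
Qed.

Lemma sum_ifj (R : comNzRingType) (c j : nat) (A B : R) : (j < c)%N ->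
  \sum_(t < c) (if (t < j)%N then A else if (t : nat) == j then B else 0) = j%:R * A + B.
Proof.
move=> hj.
rewrite (bigID (fun t : 'I_c => (t < j.+1)%N)) /= [X in _ + X]big1 ?addr0; last first.
  move=> t; rewrite ltnS -ltnNge => h.
  by rewrite ltnNge (ltnW h) /= gtn_eqF.
rewrite -(big_ord_widen c (fun t => if (t < j)%N then A else if t == j then B else 0) hj).
rewrite big_ord_recr /= ltnn eqxx (eq_bigr (fun _ => A)); last by move=> t _; rewrite ltn_ord.
by rewrite sumr_const card_ord mulr_natl.
Qed.

Definition wt (R : comNzRingType) (j t : nat) : R :=
  if (t < j)%N then 1 else if t == j then - j%:R else 0.

Definition helm (R : comNzRingType) (n : nat) (C : {set 'I_n}) (j k : nat) : R :=
  \sum_(t < #|C|) wt R j t * ((k == enum_val t :> nat))%:R.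

Lemma sum_delta' (R : comNzRingType) (N : nat) (k : 'I_N) :
  \sum_(l < N) ((l : nat) == k)%:R = 1 :> R.
Proof.
rewrite (bigD1 k) //= eqxx big1 ?addr0 // => l hl.
by rewrite (inj_eq val_inj) (negbTE hl).
Qed.

Lemma helm_sum (R : comNzRingType) (n : nat) (C : {set 'I_n}) (j : nat) :
  (j < #|C|)%N -> \sum_(k < n) helm R C j k = 0.
Proof.
move=> hj; rewrite /helm exchange_big /=.
under eq_bigr do rewrite -mulr_sumr sum_delta' mulr1.
rewrite /wt sum_ifj // mulr1; exact: subrr.
Qed.

Lemma helm_out (R : comNzRingType) (n : nat) (C : {set 'I_n}) (j : nat) (k : 'I_n) :
  k \notin C -> helm R C j k = 0.
Proof.
move=> hk; apply: big1 => t _.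
case: eqP => [e|]; last by rewrite mulr0.
by exfalso; move: hk; rewrite (val_inj e) enum_valP.
Qed.

Lemma helm_dot (R : comNzRingType) (n : nat) (C : {set 'I_n}) (j j' : nat) :
  \sum_(k < n) helm R C j k * helm R C j' k = \sum_(t < #|C|) wt R j t * wt R j' t.
Proof.
rewrite /helm.
have -> : \sum_(k < n) (\sum_(t < #|C|) wt R j t * ((k == enum_val t :> nat))%:R) *
    (\sum_(s < #|C|) wt R j' s * ((k == enum_val s :> nat))%:R) =
  \sum_(k < n) \sum_(t < #|C|) \sum_(s < #|C|) (wt R j t * wt R j' s) *
     (((k == enum_val t :> nat))%:R * ((k == enum_val s :> nat))%:R).
  apply: eq_bigr => k _; rewrite mulr_suml; apply: eq_bigr => t _.
  rewrite mulr_sumr; apply: eq_bigr => s _.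
  ring.
rewrite exchange_big /=; apply: eq_bigr => t _.
rewrite exchange_big /=.
rewrite (bigD1 t) //= [X in _ + X]big1 ?addr0; last first.
  move=> s hs; rewrite -mulr_sumr big1 ?mulr0 // => k _.
  case: (eqVneq (k : nat) (enum_val t)) => [e|]; last by rewrite mul0r.
  case: (eqVneq (k : nat) (enum_val s)) => [e'|]; last by rewrite mulr0.
  by exfalso; move: hs; rewrite (enum_val_inj (val_inj (etrans (esym e) e'))) eqxx.
rewrite -mulr_sumr (eq_bigr (fun k : 'I_n => ((k : nat) == enum_val t)%:R)).
  by rewrite sum_delta' mulr1.
by move=> k _; case: eqP; rewrite ?mulr1 ?mulr0.
Qed.

Lemma wt_norm (R : comNzRingType) (c j : nat) : (j < c)%N ->
  \sum_(t < c) wt R j t * wt R j t = j%:R + j%:R ^+ 2.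
Proof.
move=> hj; transitivity (j%:R * 1 + j%:R ^+ 2 : R); last by rewrite mulr1.
rewrite -(@sum_ifj R c j 1 (j%:R ^+ 2) hj).
apply: eq_bigr => t _; rewrite /wt; case: ifP => _; first by rewrite mulr1.
by case: ifP => _; rewrite ?mulr0 // mulrNN expr2.
Qed.

Lemma wt_orth (R : comNzRingType) (c j j' : nat) : (j < j')%N -> (j' < c)%N ->
  \sum_(t < c) wt R j t * wt R j' t = 0.
Proof.
move=> hjj hj'; have hj : (j < c)%N by apply: ltn_trans hj'.
transitivity (j%:R * 1 - j%:R : R); last by rewrite mulr1 subrr.
rewrite -(@sum_ifj R c j 1 (- j%:R) hj).
apply: eq_bigr => t _; rewrite /wt.
case: (ltnP t j) => htj.
  by rewrite (ltn_trans htj hjj) mulr1.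
case: eqP => [->|_]; last by rewrite mul0r.
by rewrite hjj mulr1.
Qed.

Lemma mult_bound (R : numFieldType) (n m : nat) (L M : nat -> R) (a : R) :
  (\prod_(k < n) ('X - (L k)%:P))^`() = n%:R *: \prod_(i < m) ('X - (M i)%:P) ->
  (\prod_(k < n) ('X - (L k)%:P)).[a] = 0 ->
  (#|[set i : 'I_m | M i == a]| < #|[set k : 'I_n | L k == a]|)%N.
Proof.
rewrite (@split_prod _ n L a) (@split_prod _ m M a).
set cm := #|[set i : 'I_m | M i == a]|; set cl := #|[set k : 'I_n | L k == a]|.
set h := \prod_(k < n | L k != a) ('X - (L k)%:P).
set w := \prod_(i < m | M i != a) ('X - (M i)%:P).
move=> hd hq.
have ha : h.[a] != 0.
  rewrite /h horner_prod; apply/prodf_neq0 => k hk.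
  by rewrite hornerXsubC subr_eq0 eq_sym.
case E : cl hd hq => [|cl'] hd hq.
  by move: hq; rewrite expr0 mul1r => /eqP; rewrite (negbTE ha).
rewrite ltnNge; apply/negP => hc.
have E1 : (('X - a%:P) ^+ cl'.+1 * h)^`() =
    ('X - a%:P) ^+ cl' * (cl'.+1%:R%:P * h + ('X - a%:P) * h^`()).
  rewrite derivM deriv_exp derivXsubC mul1r exprS /=.
  rewrite -mulr_natl -polyC_natr; ring.
have E2 : n%:R *: (('X - a%:P) ^+ cm * w) =
    ('X - a%:P) ^+ cl' * (n%:R%:P * (('X - a%:P) ^+ (cm - cl') * w)).
  rewrite -mul_polyC -{1}(subnKC (ltnW hc)) exprD; ring.
rewrite E1 E2 in hd.
have nz : ('X - a%:P) ^+ cl' != 0 by rewrite expf_neq0 // polyXsubC_eq0.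
have := mulfI nz hd => /(congr1 (fun p => p.[a])).
rewrite !hornerE subrr expr0n /=.
have -> : (cm - cl' == 0)%N = false by rewrite subn_eq0 leqNgt hc.
rewrite !mul0r !mulr0 addr0 mul0r => /eqP; rewrite mulf_eq0 (negbTE ha) orbF pnatr_eq0.
by [].
Qed.

Lemma sumsq_pos (R : realFieldType) (n : nat) (f : nat -> R) :
  (0 < n)%N -> f 0%N != 0 -> 0 < \sum_(k < n) f k ^+ 2.
Proof.
move=> n0 hf; rewrite (bigD1 (Ordinal n0)) //=.
apply: lt_le_trans (_ : f 0%N ^+ 2 <= _); first by rewrite lt_def sqr_ge0 andbT sqrf_eq0.
rewrite lerDl; apply: sumr_ge0 => *; exact: sqr_ge0.
Qed.

Lemma deriv_q (R : comNzRingType) (n : nat) (L : nat -> R) :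
  (\prod_(k < n) ('X - (L k)%:P))^`() =
  \sum_(k < n) \prod_(j < n | (j : nat) != k) ('X - (L j)%:P).
Proof.
rewrite (@deriv_prod_ord _ n (fun k => 'X - (L k)%:P)); apply: eq_bigr => k _; by rewrite derivXsubC mul1r.
Qed.

Lemma key_id (R : comNzRingType) (n : nat) (L : nat -> R) (al : R) :
  let q := \prod_(k < n) ('X - (L k)%:P) in
  let qk := fun k : nat => \prod_(j < n | (j : nat) != k) ('X - (L j)%:P) in
  q.[al] *: q^`() - q^`().[al] *: q = (al%:P - 'X) * \sum_(k < n) (qk k).[al] *: qk k.
Proof.
move=> q qk; rewrite /q deriv_q -/q horner_sum scaler_suml scaler_sumr -sumrB mulr_sumr.
apply: eq_bigr => k _.
have E : q = ('X - (L k)%:P) * qk k by rewrite /q (@prod_D1 _ n k (fun j => 'X - (L j)%:P) (ltn_ord k)).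
have Ea : q.[al] = (al - L k) * (qk k).[al] by rewrite {1}E hornerM hornerXsubC.
rewrite Ea [in X in _ - X]E -!mul_polyC polyCM polyCB. rewrite /qk; ring.
Qed.

Lemma nonroot_simple (R : realFieldType) (n m : nat) (L M : nat -> R) (al : R) :
  (0 < n)%N ->
  (\prod_(k < n) ('X - (L k)%:P))^`() = n%:R *: \prod_(i < m) ('X - (M i)%:P) ->
  (\prod_(k < n) ('X - (L k)%:P)).[al] != 0 ->
  (#|[set i : 'I_m | M i == al]| <= 1)%N.
Proof.
move=> n0 hd hq; rewrite leqNgt; apply/negP => hc.
have Id := @key_id R n L al; simpl in Id.
set q := \prod_(k < n) ('X - (L k)%:P) in hd hq Id.
set T := \sum_(k < n) _ in Id.
set c := #|[set i : 'I_m | M i == al]| in hc.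
set w := \prod_(i < m | M i != al) ('X - (M i)%:P).
have hd' : q^`() = ('X - al%:P) * (('X - al%:P) * (n%:R%:P * (('X - al%:P) ^+ (c - 2) * w))).
  rewrite hd (@split_prod _ m M al) -/c -/w -mul_polyC.
  rewrite -{1}(subnKC hc) exprD; ring.
have hd0 : q^`().[al] = 0 by rewrite hd' hornerM hornerXsubC subrr mul0r.
rewrite hd0 scale0r subr0 hd' -mul_polyC in Id.
have Id' : ('X - al%:P) * (q.[al]%:P * (('X - al%:P) * (n%:R%:P * (('X - al%:P) ^+ (c - 2) * w))))
   = ('X - al%:P) * (- T).
  apply: (@etrans _ _ ((al%:P - 'X) * T)); first by rewrite -Id; ring.
  ring.
have := mulfI (negbT (polyXsubC_eq0 al)) Id' => /(congr1 (fun p => p.[al])).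
rewrite hornerN !hornerM hornerXsubC subrr mul0r mulr0 /T horner_sum.
move=> /esym /eqP; rewrite oppr_eq0; apply/negP; rewrite gt_eqF //.
have -> : \sum_(i < n) ((\prod_(j < n | j != i :> nat) ('X - (L j)%:P)).[al] *:
    \prod_(j < n | j != i :> nat) ('X - (L j)%:P)).[al] =
    \sum_(i < n) (\prod_(j < n | j != i :> nat) ('X - (L j)%:P)).[al] ^+ 2.
  by apply: eq_bigr => i _; rewrite hornerZ expr2.
apply: (@sumsq_pos _ n (fun i => (\prod_(j < n | j != i :> nat) ('X - (L j)%:P)).[al])) => //.
apply: contra hq => /eqP h0.
by rewrite /q (@prod_D1 _ n 0 (fun j => 'X - (L j)%:P) n0) hornerM h0 mulr0.
Qed.

Lemma eig_part (R : realFieldType) (m : nat) (L M : nat -> R) :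
  (0 < m)%N ->
  (\prod_(k < m.+1) ('X - (L k)%:P))^`() = m.+1%:R *: \prod_(i < m) ('X - (M i)%:P) ->
  exists y : nat -> nat -> R, exists be : nat -> R,
   [/\ forall i, (i < m)%N -> \sum_(k < m.+1) y i k = 0,
       forall i k, (i < m)%N -> (k < m.+1)%N -> L k * y i k = M i * y i k + be i,
       forall i, (i < m)%N -> 0 < \sum_(k < m.+1) y i k ^+ 2 &
       forall i i', (i < m)%N -> (i' < m)%N -> i != i' -> \sum_(k < m.+1) y i k * y i' k = 0].
Proof.
move=> m0 hd.
pose q := \prod_(k < m.+1) ('X - (L k)%:P).
pose qk k := \prod_(j < m.+1 | (j : nat) != k) ('X - (L j)%:P).
pose C i := [set k : 'I_m.+1 | L k == M i].
pose J i := #|[set i' : 'I_m | (M i' == M i) && (i' <= i)%N]|.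
pose y i k := if q.[M i] != 0 then (qk k).[M i] else helm R (C i) (J i) k.
pose be i := if q.[M i] != 0 then - q.[M i] else 0.
exists y, be.
have hE : forall k, (k < m.+1)%N -> forall x, q.[x] = (x - L k) * (qk k).[x].
  by move=> k hk x; rewrite /q (@prod_D1 _ m.+1 k (fun j => 'X - (L j)%:P) hk) hornerM hornerXsubC.
have hder : forall x, q^`().[x] = \sum_(k < m.+1) (qk k).[x].
  by move=> x; rewrite /q deriv_q horner_sum.
have hroot : forall i, (i < m)%N -> q^`().[M i] = 0.
  move=> i hi; rewrite /q hd hornerZ horner_prod.
  by rewrite (@prod_D1 _ m i (fun j => ('X - (M j)%:P).[M i]) hi) hornerXsubC subrr mul0r mulr0.
have hJ : forall i, (i < m)%N -> q.[M i] = 0 -> (0 < J i)%N /\ (J i < #|C i|)%N.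
  move=> i hi hq0; split.
    by apply/card_gt0P; exists (Ordinal hi); rewrite inE eqxx leqnn.
  apply: leq_ltn_trans (_ : (#|[set i' : 'I_m | M i' == M i]| < _)%N).
    by apply: subset_leq_card; apply/subsetP => x; rewrite !inE => /andP[].
  exact: (mult_bound hd hq0).
have hJinj : forall i i', (i < m)%N -> (i' < m)%N -> M i = M i' -> (i < i')%N -> (J i < J i')%N.
  move=> i i' hi hi' e lt; apply: proper_card; apply/properP; split.
    apply/subsetP => x; rewrite !inE e => /andP[-> h] /=; exact: leq_trans h (ltnW lt).
  by exists (Ordinal hi'); rewrite !inE ?eqxx ?leqnn //= -e eqxx /= -ltnNge.
have hsimp : forall i i', (i < m)%N -> (i' < m)%N -> q.[M i] != 0 -> M i = M i' -> i = i'.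
  move=> i i' hi hi' hq e.
  have := nonroot_simple (ltn0Sn m) hd hq => /card_le1_eqP /(_ (Ordinal hi) (Ordinal hi')).
  by rewrite !inE eqxx -e eqxx => /(_ isT isT) [].
have cross : forall i i', (i < m)%N -> (i' < m)%N -> q.[M i] != 0 -> q.[M i'] = 0 ->
    \sum_(k < m.+1) (qk k).[M i] * helm R (C i') (J i') k = 0.
  move=> i i' hi hi' hq hq'.
  have nab : M i - M i' != 0.
    rewrite subr_eq0; apply: contra hq => /eqP ->; by rewrite hq'.
  have [_ hJC] := hJ i' hi' hq'.
  transitivity (\sum_(k < m.+1) (q.[M i] / (M i - M i')) * helm R (C i') (J i') k).
    apply: eq_bigr => k _; case hkC : (k \in C i').
      move: (hkC); rewrite inE => /eqP e.
      rewrite (hE k (ltn_ord k) (M i)) e. congr (_ * _); by rewrite [RHS]mulrC mulrA mulVf // mul1r.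
    by rewrite helm_out ?hkC // !mulr0.
  by rewrite -mulr_sumr helm_sum // mulr0.
split.
- move=> i hi; rewrite /y; case: (boolP (q.[M i] != 0)) => hq; rewrite ?hq ?(negbTE hq).
    by rewrite -hder hroot.
  have [_ hJC] := hJ i hi (eqP (negPn hq)).
  exact: helm_sum.
- move=> i k hi hk; rewrite /y /be; case: (boolP (q.[M i] != 0)) => hq; rewrite ?hq ?(negbTE hq).
    rewrite (hE k hk (M i)); ring.
  rewrite addr0; case hkC : (Ordinal hk \in C i).
    by move: hkC; rewrite inE => /eqP /= ->.
  have := helm_out R (J i) (negbT hkC); rewrite /= => ->; by rewrite !mulr0.
- move=> i hi; rewrite /y; case: (boolP (q.[M i] != 0)) => hq; rewrite ?hq ?(negbTE hq).
    apply: (@sumsq_pos _ m.+1 (fun k => (qk k).[M i])) => //.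
    apply: contra hq => /eqP h0; by rewrite (hE 0%N isT) h0 mulr0.
  have [hJ0 hJC] := hJ i hi (eqP (negPn hq)).
  under eq_bigr do rewrite expr2.
  rewrite helm_dot wt_norm //.
  have h1 : (0 : R) < (J i)%:R by rewrite ltr0n.
  have h2 : (0 : R) <= (J i)%:R ^+ 2 by exact: sqr_ge0.
  lra.
- move=> i i' hi hi' ne; rewrite /y.
  case: (boolP (q.[M i] != 0)) => hq; rewrite ?hq ?(negbTE hq);
  case: (boolP (q.[M i'] != 0)) => hq'; rewrite ?hq' ?(negbTE hq').
  + have nab : M i != M i'.
      by apply: contra ne => /eqP e; apply/eqP; exact: hsimp.
    have H0 : (M i - M i') * \sum_(k < m.+1) (qk k).[M i] * (qk k).[M i'] = 0.
      rewrite mulr_sumr.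
      transitivity (\sum_(k < m.+1) ((qk k).[M i'] * q.[M i] - (qk k).[M i] * q.[M i'])).
        apply: eq_bigr => k _; rewrite (hE k (ltn_ord k) (M i)) (hE k (ltn_ord k) (M i')); ring.
      by rewrite sumrB -!mulr_suml -!hder !hroot // !mul0r subrr.
    move/eqP: H0; rewrite mulf_eq0 subr_eq0 (negbTE nab) /=; exact: eqP.
  + exact: cross hi hi' hq (eqP (negPn hq')).
  + rewrite (eq_bigr (fun k : 'I_m.+1 => (qk k).[M i'] * helm R (C i) (J i) k)); last by move=> *; rewrite mulrC.
    exact: cross hi' hi hq' (eqP (negPn hq)).
  + case: (eqVneq (M i) (M i')) => e.
      have eC : C i' = C i by rewrite /C e.
      rewrite eC helm_dot.
      have [_ hJC] := hJ i hi (eqP (negPn hq)).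
      have [_ hJC'] := hJ i' hi' (eqP (negPn hq')).
      rewrite -eC in hJC.
      case: (ltngtP i i') => hii.
      * by apply: wt_orth; [exact: hJinj| rewrite -eC].
      * rewrite (eq_bigr (fun t : 'I_#|C i| => wt R (J i') t * wt R (J i) t)); last by move=> *; rewrite mulrC.
        by apply: wt_orth; [apply: hJinj => //; rewrite e| rewrite eC in hJC].
      * by exfalso; move/eqP: ne; apply.
    apply: big1 => k _; case hkC : (k \in C i).
      have hkC' : k \notin C i'.
        by move: hkC; rewrite !inE => /eqP ->.
      by rewrite (helm_out R (J i') hkC') mulr0.
    by rewrite (helm_out R (J i) (negbT hkC)) mul0r.
Qed.

Unset Implicit Arguments. Set Strict Implicit.

Theorem corollary2p5 (R : realType) (n : nat) (lam mu : nat -> R) :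
  (2 <= n)%N ->
  (forall i : nat, (1 <= i)%N -> (i < n)%N -> lam i.+1 <= lam i) ->
  (forall i : nat, (1 <= i)%N -> (i < n.-1)%N -> mu i.+1 <= mu i) ->
  (\prod_(1 <= j < n.+1) ('X - (lam j)%:P))^`()
    = n%:R *: \prod_(1 <= j < n) ('X - (mu j)%:P) ->
  forall r : nat, (1 <= r)%N -> (r <= n.-1)%N ->
    (n.-1)%:R * (\sum_(1 <= j < r.+1) lam j.+1) + r%:R * lam 1%N
      <= n%:R * (\sum_(1 <= j < r.+1) mu j)
    /\ n%:R * (\sum_(1 <= j < r.+1) mu j)
      <= (n.-1)%:R * (\sum_(1 <= j < r.+1) lam j) + r%:R * lam r.+1.
Proof.
case: n => [|[|m]] // _ hlam hmu hder r r1 rn.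
pose L k := lam k.+1; pose M i := mu i.+1.
have hd : (\prod_(k < m.+2) ('X - (L k)%:P))^`() = m.+2%:R *: \prod_(i < m.+1) ('X - (M i)%:P).
  by move: hder; rewrite big_add1 /= big_mkord big_add1 /= big_mkord.
have hL : forall k, (k.+1 < m.+2)%N -> L k.+1 <= L k by move=> k hk; apply: hlam.
have hM : forall i, (i.+1 < m.+1)%N -> M i.+1 <= M i by move=> i hi; apply: hmu.
have [y [be [h1 h2 h3 h4]]] := @eig_part R m.+1 L M (ltn0Sn m) hd.
have := @spec_part R m.+1 L M y be (ltn0Sn m) hL hM h1 h2 h3 h4 r r1 rn.
have -> : \sum_(1 <= j < r.+1) mu j = \sum_(i < r) M i by rewrite big_add1 /= big_mkord.
have -> : \sum_(1 <= j < r.+1) lam j = \sum_(i < r) L i by rewrite big_add1 /= big_mkord.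
by [].
Qed.
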